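(* Let $\mathcal V\subset\mathbb Q$ satisfy Hypothesis (H) and let $\mathcal R\subset\mathbb Q$ satisfy property $\star_{\mathcal V}$. Set $\Gamma=\mathcal V\setminus\mathcal R$ and $\Lambda=\psi(\Gamma)$. Then for every $g\in\mathscr H_{|\Lambda}$ there exists $f\in\mathscr H_{|\Gamma}$ such that $L(f)=g$.
   Context: Let $\mathbf K$ be a field and $\ell\geq 2$ an integer. Let $\mathscr H$ be the field of Hahn series $f=\sum_{\gamma\in\mathbb Q}f_\gamma z^\gamma$ with coefficients in $\mathbf K$ and well-ordered support $\operatorname{supp} f=\{\gamma: f_\gamma\neq 0\}$; for $Q\subset\mathbb Q$, $\mathscr H_{|Q}=\{f\in\mathscr H:\operatorname{supp} f\subset Q\}$. Let $\phi_\ell$ be the automorphism $f(z)\mapsto f(z^\ell)$. Let $L=a_n\phi_\ell^n+\dots+a_0$ with $n\geq1$, $a_i\in\mathbf K[z]$, $a_0a_n\neq0$, acting by $L(f)=\sum_i a_i f(z^{\ell^i})$. Let $\mathcal P(L)=\{(\ell^i,j): 0\le i\le n,\ j\in\operatorname{supp} a_i\}$. The Newton polygon of $L$ is the convex hull of $\{(\ell^i,j): 0\le i\le n,\ j\geq\operatorname{val} a_i\}\subset\mathbb R^2$; the slopes of its non-vertical edges form $\mathcal S(L)$. Define $\Psi(v)=\{v\ell^i+j:(\ell^i,j)\in\mathcal P(L)\}$, $\psi(v)=\min\Psi(v)$, $\pi(q)=\max\{(q-j)/\ell^i:(\ell^i,j)\in\mathcal P(L)\}$; images of sets are taken elementwise.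 Hypothesis (H) on $\mathcal V\subset\mathbb Q$: (1) every $f\in\mathscr H$ with $L(f)=0$ satisfies $\operatorname{supp} f\subset\mathcal V$; (2) $\mathcal V$ is well-ordered; (3) $-\mathcal S(L)\subset\mathcal V$; (4) $\bigcup_{v\in\mathcal V}\pi(\Psi(v))=\mathcal V$. A set $\mathcal R\subset\mathbb Q$ satisfies $\star_{\mathcal V}$ if (a) $-\mathcal S(L)\subset\mathcal R\subset\mathcal V$ and (b) $\bigcup_{v\in\mathcal V\setminus\mathcal R}\pi(\Psi(v))=\mathcal V\setminus\mathcal R$. *)

(* Defs.v *)
From mathcomp Require Import all_boot all_order all_algebra.
Set Implicit Arguments. Unset Strict Implicit. Unset Printing Implicit Defensive.
Import Order.TTheory GRing.Theory Num.Theory.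
Local Open Scope ring_scope.

Definition qset := rat -> Prop.

Definition wellordered (S : qset) : Prop :=
  forall A : qset, (forall x, A x -> S x) -> (exists x, A x) ->
    exists m, A m /\ forall x, A x -> m <= x.

(* Hahn series f = sum_{gamma in Q} f_gamma z^gamma are represented by their
   coefficient function rat -> K. *)
Definition supp (K : fieldType) (f : rat -> K) : qset := fun g => f g != 0.

Definition hahn (K : fieldType) (f : rat -> K) : Prop := wellordered (supp f).

Definition hahn_on (K : fieldType) (Q : qset) (f : rat -> K) : Prop :=
  hahn f /\ forall g, supp f g -> Q g.

Definition lpow (l i : nat) : rat := (l%:R) ^+ i.

(* The operator L = a_n phi^n + ... + a_0, with a : nat -> {poly K}
   (only a 0, ..., a n are used).  L(f) = sum_i a_i f(z^{l^i}), and the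
   coefficient of z^gamma in a_i(z) f(z^{l^i}) is
   sum_j (a_i)_j f_{(gamma - j)/l^i}. *)
Definition Lop (K : fieldType) (l n : nat) (a : nat -> {poly K})
    (f : rat -> K) : rat -> K :=
  fun gamma => \sum_(i < n.+1) \sum_(j < size (a i))
      (a i)`_j * f ((gamma - j%:R) / lpow l i).

Definition pval (K : fieldType) (p : {poly K}) : nat :=
  find (fun c => c != 0) p.

(* P(L) = {(l^i, j) : 0 <= i <= n, j in supp a_i}, encoded by the list of
   pairs (i, j). *)
Definition PL (K : fieldType) (n : nat) (a : nat -> {poly K}) : seq (nat * nat) :=
  [seq ij <- [seq (i, j) | i <- iota 0 n.+1, j <- iota 0 (size (a i))]
     | (a ij.1)`_ij.2 != 0].

Definition Psi (K : fieldType) (l n : nat) (a : nat -> {poly K}) (v : rat) : qset :=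
  fun w => exists2 ij, ij \in PL n a & w = v * lpow l ij.1 + (ij.2)%:R.

(* psi(v) = min Psi(v); the seed v*l^0 + val a_0 belongs to Psi(v) since a_0 != 0 *)
Definition psi (K : fieldType) (l n : nat) (a : nat -> {poly K}) (v : rat) : rat :=
  \big[Num.min/(v + (pval (a 0%N))%:R)]_(ij <- PL n a) (v * lpow l ij.1 + (ij.2)%:R).

Definition pi_ (K : fieldType) (l n : nat) (a : nat -> {poly K}) (q : rat) : rat :=
  \big[Num.max/(q - (pval (a 0%N))%:R)]_(ij <- PL n a) ((q - (ij.2)%:R) / lpow l ij.1).

(* The generating set of the Newton polygon:
   {(l^i, j) : 0 <= i <= n, j >= val a_i} (with a_i = 0 contributing nothing,
   its valuation being +oo). Points are taken in Q^2. *)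
Definition NPgen (K : fieldType) (l n : nat) (a : nat -> {poly K})
    (p : rat * rat) : Prop :=
  exists i : nat, [/\ (i <= n)%N, a i != 0, p.1 = lpow l i & (pval (a i))%:R <= p.2].

Definition conv_hull (A : rat * rat -> Prop) (p : rat * rat) : Prop :=
  exists (k : nat) (w : nat -> rat) (q : nat -> rat * rat),
    [/\ forall i, (i < k)%N -> 0 <= w i /\ A (q i),
        \sum_(i < k) w i = 1,
        p.1 = \sum_(i < k) w i * (q i).1 &
        p.2 = \sum_(i < k) w i * (q i).2].

Definition newton_polygon (K : fieldType) (l n : nat) (a : nat -> {poly K}) :=
  conv_hull (NPgen l n a).

(* S(L): slopes of the non-vertical edges of the Newton polygon N.
   A non-vertical edge is the intersection of N with a non-vertical supporting
   line y = s x + c (N lying in the half-plane y >= s x + c; the other side is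
   impossible since N is unbounded upwards), provided this intersection
   contains at least two distinct points. *)
Definition slopes (K : fieldType) (l n : nat) (a : nat -> {poly K}) : qset :=
  fun s => exists c : rat,
    (forall p, newton_polygon l n a p -> s * p.1 + c <= p.2) /\
    exists p q, [/\ newton_polygon l n a p, newton_polygon l n a q, p <> q,
                    p.2 = s * p.1 + c & q.2 = s * q.1 + c].

Definition hypH (K : fieldType) (l n : nat) (a : nat -> {poly K}) (V : qset) : Prop :=
  [/\ forall f : rat -> K, hahn f -> (forall g, Lop l n a f g = 0) ->
        forall g, supp f g -> V g,
      wellordered V,
      (forall s, slopes l n a s -> V (- s)) &
      (forall x, (exists v, V v /\ exists2 w, Psi l n a v w & x = pi_ l n a w) <-> V x)].

Definition starV (K : fieldType) (l n : nat) (a : nat -> {poly K}) (V R : qset) : Prop :=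
  [/\ (forall s, slopes l n a s -> R (- s)),
      (forall x, R x -> V x) &
      (forall x, (exists v, (V v /\ ~ R v) /\ exists2 w, Psi l n a v w & x = pi_ l n a w)
                 <-> (V x /\ ~ R x))].

(* Main.v *)
Require Import Defs.
From mathcomp Require Import all_boot all_order all_algebra.
From Stdlib Require Import ClassicalEpsilon Classical.
Set Implicit Arguments. Unset Strict Implicit.
Import Order.TTheory GRing.Theory Num.Theory.
Local Open Scope ring_scope.

Lemma lpow_gt0 (l i : nat) : (2 <= l)%N -> 0 < lpow l i.
Proof. move=> hl; rewrite /lpow exprn_gt0 // ltr0n; by case: l hl. Qed.

Lemma lpow_inj (l i i' : nat) : (2 <= l)%N -> lpow l i = lpow l i' -> i = i'.
Proof.
move=> hl; rewrite /lpow -!natrX => /eqP; rewrite eqr_nat => /eqP.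
exact: expnI.
Qed.

Lemma mem_PL (K : fieldType) (n : nat) (a : nat -> {poly K}) (ij : nat * nat) :
  (ij \in PL n a) = [&& (ij.1 <= n)%N, (ij.2 < size (a ij.1))%N & (a ij.1)`_ij.2 != 0].
Proof.
case: ij => i j /=; rewrite /PL mem_filter /=.
have -> : ((i, j) \in [seq (i0, j0) | i0 <- iota 0 n.+1, j0 <- iota 0 (size (a i0))])
   = (i <= n)%N && (j < size (a i))%N.
  apply/allpairsPdep/andP => [[i' [j' [hi hj [e1 e2]]]]|[h1 h2]].
    by subst; move: hi hj; rewrite !mem_iota /= !add0n ltnS => -> ->.
  by exists i, j; rewrite !mem_iota /= !add0n ltnS.
by rewrite andbC -andbA.
Qed.

Lemma uniq_PL (K : fieldType) (n : nat) (a : nat -> {poly K}) : uniq (PL n a).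
Proof.
rewrite /PL filter_uniq //; apply: allpairs_uniq_dep.
- exact: iota_uniq.
- move=> i _; exact: iota_uniq.
- by move=> [x1 y1] [x2 y2] _ _ /= [-> ->].
Qed.

Lemma pval_lt (K : fieldType) (p : {poly K}) : p != 0 -> (pval p < size p)%N.
Proof.
move=> hp; rewrite /pval -has_find; apply/hasP; exists (lead_coef p) => //.
  by apply: mem_nth; rewrite prednK ?size_poly_gt0.
by rewrite lead_coef_eq0.
Qed.

Lemma pval_coef (K : fieldType) (p : {poly K}) : p != 0 -> p`_(pval p) != 0.
Proof.
move=> hp; have := pval_lt hp; rewrite /pval -has_find => h.
exact: (nth_find 0 h).
Qed.

Lemma pval_le (K : fieldType) (p : {poly K}) j : p`_j != 0 -> (pval p <= j)%N.
Proof.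
move=> hj; rewrite leqNgt; apply/negP => h.
by have := before_find 0 h; rewrite /= hj.
Qed.

Lemma pval_PL (K : fieldType) (n : nat) (a : nat -> {poly K}) i :
  (i <= n)%N -> a i != 0 -> (i, pval (a i)) \in PL n a.
Proof. by move=> hi ha; rewrite mem_PL /= hi pval_lt // pval_coef. Qed.

Lemma bigmin_le (T : eqType) (s : seq T) (F : T -> rat) x0 t :
  t \in s -> \big[Num.min/x0]_(i <- s) F i <= F t.
Proof.
elim: s => // u s IH; rewrite inE big_cons => /orP [/eqP ->|h].
  by rewrite ge_min lexx.
by rewrite ge_min IH ?orbT.
Qed.

Lemma bigmin_att (T : eqType) (s : seq T) (F : T -> rat) x0 :
  \big[Num.min/x0]_(i <- s) F i = x0 \/ exists2 t, t \in s & \big[Num.min/x0]_(i <- s) F i = F t.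
Proof.
elim: s => [|u s IH]; first by rewrite big_nil; left.
rewrite big_cons; case: (leP (F u) (\big[Num.min/x0]_(i <- s) F i)) => h.
  by right; exists u; rewrite ?mem_head //.
case: IH => [->|[t ht ->]]; first by left.
by right; exists t => //; rewrite inE ht orbT.
Qed.

Lemma bigmax_ge (T : eqType) (s : seq T) (F : T -> rat) x0 t :
  t \in s -> F t <= \big[Num.max/x0]_(i <- s) F i.
Proof.
elim: s => // u s IH; rewrite inE big_cons => /orP [/eqP ->|h].
  by rewrite le_max lexx.
by rewrite le_max IH ?orbT.
Qed.

Lemma bigmax_att (T : eqType) (s : seq T) (F : T -> rat) x0 :
  \big[Num.max/x0]_(i <- s) F i = x0 \/ exists2 t, t \in s & \big[Num.max/x0]_(i <- s) F i = F t.
Proof.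
elim: s => [|u s IH]; first by rewrite big_nil; left.
rewrite big_cons; case: (leP (F u) (\big[Num.max/x0]_(i <- s) F i)) => h.
  case: IH => [->|[t ht ->]]; first by left.
  by right; exists t => //; rewrite inE ht orbT.
by right; exists u; rewrite ?mem_head //.
Qed.

Lemma psi_le (K : fieldType) l n (a : nat -> {poly K}) v ij :
  ij \in PL n a -> psi l n a v <= v * lpow l ij.1 + (ij.2)%:R.
Proof. move=> h; rewrite /psi; exact: (bigmin_le (fun ij => v * lpow l ij.1 + (ij.2)%:R)). Qed.

Lemma psi_att (K : fieldType) l n (a : nat -> {poly K}) v :
  a 0%N != 0 -> exists2 ij, ij \in PL n a & psi l n a v = v * lpow l ij.1 + (ij.2)%:R.
Proof.
move=> ha; rewrite /psi.
case: (bigmin_att (PL n a) (fun ij => v * lpow l ij.1 + (ij.2)%:R) (v + (pval (a 0%N))%:R)) => [->|//].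
by exists (0%N, pval (a 0%N)); rewrite ?pval_PL //= /lpow expr0 mulr1.
Qed.

Lemma pi_ge (K : fieldType) l n (a : nat -> {poly K}) w ij :
  ij \in PL n a -> (w - (ij.2)%:R) / lpow l ij.1 <= pi_ l n a w.
Proof. move=> h; rewrite /pi_; exact: (bigmax_ge (fun ij => (w - (ij.2)%:R) / lpow l ij.1)). Qed.

Lemma pi_att (K : fieldType) l n (a : nat -> {poly K}) w :
  a 0%N != 0 -> exists2 ij, ij \in PL n a & pi_ l n a w = (w - (ij.2)%:R) / lpow l ij.1.
Proof.
move=> ha; rewrite /pi_.
case: (bigmax_att (PL n a) (fun ij => (w - (ij.2)%:R) / lpow l ij.1) (w - (pval (a 0%N))%:R)) => [->|//].
by exists (0%N, pval (a 0%N)); rewrite ?pval_PL //= /lpow expr0 divr1.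
Qed.

Lemma psi_pi (K : fieldType) l n (a : nat -> {poly K}) w :
  (2 <= l)%N -> a 0%N != 0 -> psi l n a (pi_ l n a w) = w.
Proof.
move=> hl ha; apply/eqP; rewrite eq_le; apply/andP; split.
  have [ij hij e] := @pi_att K l n a w ha.
  apply: (le_trans (psi_le _ _ hij)); rewrite e mulfVK ?subrK //.
  by rewrite gt_eqF // lpow_gt0.
have [ij hij ->] := @psi_att K l n a (pi_ l n a w) ha.
have := @pi_ge K l n a w _ hij; rewrite ler_pdivrMr ?lpow_gt0 //.
by rewrite lerBlDr.
Qed.

Lemma psi_mono (K : fieldType) l n (a : nat -> {poly K}) v v' :
  (2 <= l)%N -> a 0%N != 0 -> v' < v -> psi l n a v' < psi l n a v.
Proof.
move=> hl ha hv; have [ij hij ->] := @psi_att K l n a v ha.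
apply: (le_lt_trans (psi_le _ _ hij)); rewrite ltrD2r ltr_pM2r //.
exact: lpow_gt0.
Qed.

Lemma iota_ord (K : fieldType) m (G : nat -> K) :
  \sum_(i <- iota 0 m) G i = \sum_(i < m) G i.
Proof. by rewrite -(@big_mkord K 0 +%R m xpredT G) /index_iota subn0. Qed.

Lemma Lop_PL (K : fieldType) l n (a : nat -> {poly K}) f x :
  Lop l n a f x = \sum_(ij <- PL n a) (a ij.1)`_ij.2 * f ((x - (ij.2)%:R) / lpow l ij.1).
Proof.
rewrite /Lop /PL big_filter [RHS]big_mkcond big_allpairs_dep.
rewrite iota_ord; apply: eq_bigr => i _.
rewrite iota_ord; apply: eq_bigr => j _ /=.
by case: eqP => // ->; rewrite mul0r.
Qed.

Lemma np_point (K : fieldType) l n (a : nat -> {poly K}) p :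
  NPgen l n a p -> newton_polygon l n a p.
Proof.
move=> h; exists 1%N, (fun _ => 1), (fun _ => p); split.
- by move=> i _; split.
- by rewrite big_ord1.
- by rewrite big_ord1 mul1r.
- by rewrite big_ord1 mul1r.
Qed.

Lemma PL_NPgen (K : fieldType) l n (a : nat -> {poly K}) ij :
  ij \in PL n a -> NPgen l n a (lpow l ij.1, (ij.2)%:R).
Proof.
rewrite mem_PL => /and3P [h1 h2 h3]; exists ij.1; split => //.
  by apply: contraNneq h3 => ->; rewrite coef0.
by rewrite ler_nat pval_le.
Qed.

Lemma np_above (K : fieldType) l n (a : nat -> {poly K}) v p :
  newton_polygon l n a p -> - v * p.1 + psi l n a v <= p.2.
Proof.
move=> [k [w [q [H hw -> ->]]]].
have -> : psi l n a v = \sum_(i < k) w i * psi l n a v by rewrite -mulr_suml hw mul1r.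
rewrite mulr_sumr -big_split /=; apply: ler_sum => i _.
have [hwi hq] := H i (ltn_ord i).
rewrite mulrCA -mulrDr ler_wpM2l //.
case: hq => [j [hj haj e1 e2]].
have := psi_le l v (pval_PL hj haj); rewrite e1 /= => h.
rewrite mulNr -lerBrDl opprK; apply: (le_trans h).
by rewrite addrC lerD2r.
Qed.

Lemma min_unique (K : fieldType) l n (a : nat -> {poly K}) (R : qset) :
  (2 <= l)%N -> (forall s, slopes l n a s -> R (- s)) ->
  forall v, ~ R v -> forall ij ij', ij \in PL n a -> ij' \in PL n a ->
  v * lpow l ij.1 + (ij.2)%:R = psi l n a v ->
  v * lpow l ij'.1 + (ij'.2)%:R = psi l n a v -> ij = ij'.
Proof.
move=> hl hS v hv [i j] [i' j'] h h' e e' /=.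
case: (eqVneq i i') => [ei|ni].
  subst i'; move: e'; rewrite -e /= => /addrI /eqP; rewrite eqr_nat => /eqP ->.
  by [].
exfalso; apply: hv; rewrite -(opprK v); apply: hS.
exists (psi l n a v); split; first by move=> p; exact: np_above.
exists (lpow l i, j%:R), (lpow l i', j'%:R); split.
- exact: (np_point (PL_NPgen l h)).
- exact: (np_point (PL_NPgen l h')).
- by case=> /(lpow_inj hl) /eqP; rewrite (negbTE ni).
- by rewrite /= -e mulNr addKr.
- by rewrite /= -e' mulNr addKr.
Qed.

Definition Rel (G : qset) (y x : rat) : Prop := G y /\ G x /\ y < x.

Lemma Rel_wf (V G : qset) : wellordered V -> (forall x, G x -> V x) -> well_founded (Rel G).
Proof.
move=> hV hG x; apply: NNPP => hx.
have hGx : G x.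
  apply: NNPP => nG; apply: hx; constructor => y [_ [Gx _]]; by [].
have [m [[Gm nAm] hm]] := hV (fun y => G y /\ ~ Acc (Rel G) y)
   (fun y hy => hG y hy.1) (ex_intro _ x (conj hGx hx)).
apply: nAm; constructor => y [Gy [_ ylt]]; apply: NNPP => nA.
have := hm y (conj Gy nA); by rewrite leNgt ylt.
Qed.

Definition coef_at (K : fieldType) l n (a : nat -> {poly K}) (v : rat) : K :=
  \sum_(ij <- PL n a | v * lpow l ij.1 + (ij.2)%:R == psi l n a v) (a ij.1)`_ij.2.

Definition Tpt l (ij : nat * nat) (x : rat) : rat := (x - (ij.2)%:R) / lpow l ij.1.

Definition recv (K : Type) (G : qset) x (rec : forall y, Rel G y x -> K) (d : K) y : K :=
  match excluded_middle_informative (Rel G y x) with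
  | left p => rec y p
  | right _ => d
  end.

Definition step (K : fieldType) l n (a : nat -> {poly K}) (G : qset) (g : rat -> K)
   (x : rat) (rec : forall y, Rel G y x -> K) : K :=
  if excluded_middle_informative (G x) then
    (g (psi l n a x) - \sum_(ij <- PL n a | x * lpow l ij.1 + (ij.2)%:R != psi l n a x)
        (a ij.1)`_ij.2 * recv rec 0 (Tpt l ij (psi l n a x))) / coef_at l n a x
  else 0.

Definition sol (K : fieldType) l n (a : nat -> {poly K}) (G : qset) (g : rat -> K)
  (wf : well_founded (Rel G)) : rat -> K :=
  Fix wf (fun _ => K) (step l n a g).

Lemma sol_eq (K : fieldType) l n (a : nat -> {poly K}) (G : qset) (g : rat -> K)
  (wf : well_founded (Rel G)) x :
  sol l n a g wf x = @step K l n a G g x (fun y _ => sol l n a g wf y).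
Proof.
rewrite /sol; apply: (Fix_eq wf (fun _ => K) (@step K l n a G g)) => x' f1 f2 H; rewrite /step.
case: excluded_middle_informative => // hx; congr (_ / _); congr (_ - _).
apply: eq_bigr => ij _; congr (_ * _); rewrite /recv.
by case: excluded_middle_informative.
Qed.

Lemma coef_at_neq0 (K : fieldType) l n (a : nat -> {poly K}) (R : qset) :
  (2 <= l)%N -> a 0%N != 0 -> (forall s, slopes l n a s -> R (- s)) ->
  forall v, ~ R v -> coef_at l n a v != 0.
Proof.
move=> hl ha hS v hv.
have [ij0 h0 e0] := @psi_att K l n a v ha.
rewrite /coef_at -big_filter.
set s := [seq _ <- _ | _].
have us : uniq s by rewrite filter_uniq // uniq_PL.
have i0 : ij0 \in s by rewrite mem_filter h0 -e0 eqxx.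
have alle : forall y, y \in s -> y = ij0.
  move=> y; rewrite mem_filter => /andP [/eqP ey hy].
  exact: (min_unique hl hS hv hy h0 ey (esym e0)).
have -> : s = [:: ij0].
  move: us i0 alle; case: s => [//|y t] us i0 alle.
  have ey := alle y (mem_head _ _); subst y.
  have sub : {subset ij0 :: t <= [:: ij0]} by move=> z /alle ->; rewrite mem_head.
  have := uniq_leq_size us sub; rewrite /= ltnS leqn0 => /nilP -> //.
rewrite big_seq1; move: h0; rewrite mem_PL => /and3P [].
by [].
Qed.

From Stdlib Require Import FunctionalExtensionality.
Unset Implicit Arguments. Set Strict Implicit.

Theorem mainTheorem16 (K : fieldType) (l n : nat) (a : nat -> {poly K})
    (V R : qset) :
  (2 <= l)%N -> (1 <= n)%N -> a 0%N != 0 -> a n != 0 ->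
  hypH l n a V -> starV l n a V R ->
  let Gamma : qset := fun v => V v /\ ~ R v in
  let Lambda : qset := fun x => exists2 v, Gamma v & x = psi l n a v in
  forall g : rat -> K, hahn_on Lambda g ->
    exists f : rat -> K, hahn_on Gamma f /\ Lop l n a f = g.
Proof.
move=> hl _ ha0 _ [_ hWO _ _] [hS _ hstar] Gamma Lambda g [_ hg].
have hGV : forall x, Gamma x -> V x by move=> x [].
have wf := Rel_wf hWO hGV.
set f := sol l n a g wf.
have F0 : forall x, ~ Gamma x -> f x = 0.
  move=> x nx; rewrite /f sol_eq /step.
  by case: excluded_middle_informative.
have suppG : forall x, f x != 0 -> Gamma x.
  move=> x hx; apply: NNPP => nx; by rewrite F0 ?eqxx in hx.
have ltpt : forall x ij, ij \in PL n a ->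
    x * lpow l ij.1 + (ij.2)%:R != psi l n a x -> Tpt l ij (psi l n a x) < x.
  move=> x ij hij hP; set y := Tpt l ij (psi l n a x).
  have ey : y * lpow l ij.1 + (ij.2)%:R = psi l n a x.
    by rewrite /y /Tpt mulfVK ?subrK // gt_eqF // lpow_gt0.
  case: (ltgtP y x) => // hyx.
    have := @psi_mono K l n a y x hl ha0 hyx.
    by rewrite ltNge -ey psi_le.
  by rewrite hyx in ey; rewrite ey eqxx in hP.
have main : forall x, Gamma x -> Lop l n a f (psi l n a x) = g (psi l n a x).
  move=> x hx; rewrite Lop_PL (bigID (fun ij => x * lpow l ij.1 + (ij.2)%:R == psi l n a x)) /=.
  have hc := coef_at_neq0 hl ha0 hS hx.2.
  have e1 : \sum_(ij <- PL n a | x * lpow l ij.1 + (ij.2)%:R == psi l n a x)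
       (a ij.1)`_ij.2 * f ((psi l n a x - (ij.2)%:R) / lpow l ij.1) = coef_at l n a x * f x.
    rewrite /coef_at mulr_suml; apply: eq_bigr => ij /eqP <-.
    by rewrite addrK mulfK // gt_eqF // lpow_gt0.
  set S := \sum_(ij <- PL n a | x * lpow l ij.1 + (ij.2)%:R != psi l n a x)
        (a ij.1)`_ij.2 * recv (fun y (_ : Rel Gamma y x) => f y) 0 (Tpt l ij (psi l n a x)).
  have e2 : \sum_(ij <- PL n a | x * lpow l ij.1 + (ij.2)%:R != psi l n a x)
       (a ij.1)`_ij.2 * f ((psi l n a x - (ij.2)%:R) / lpow l ij.1) = S.
    rewrite /S big_seq_cond [RHS]big_seq_cond; apply: eq_bigr => ij /andP [hij hP].
    congr (_ * _); rewrite /recv; case: excluded_middle_informative => // nR.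
    apply: F0 => hy; apply: nR; split => //; split => //; exact: ltpt.
  have ef : f x = (g (psi l n a x) - S) / coef_at l n a x.
    rewrite /f sol_eq /step; case: excluded_middle_informative => // _.
  rewrite e1 e2 ef mulrC divfK // subrK //.
exists f; split.
  split; last by move=> x /suppG.
  move=> A hA hne; apply: hWO => //.
  by move=> x /hA /suppG /hGV.
apply: functional_extensionality => x.
case: (classic (Lambda x)) => [[v hv ->]|nL]; first exact: main.
have -> : g x = 0.
  by apply/eqP; apply: contraT => hx; exfalso; apply: nL; exact: hg.
rewrite Lop_PL big1_seq // => ij /andP [_ hij].
case: (eqVneq (f (Tpt l ij x)) 0) => [/= ->|hf]; first by rewrite mulr0.
exfalso; apply: nL; have hy := suppG _ hf.
exists (pi_ l n a x); last by rewrite psi_pi.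
apply/hstar; exists (Tpt l ij x); split => //; exists x => //.
exists ij => //; by rewrite /Tpt mulfVK ?subrK // gt_eqF // lpow_gt0.
Qed.
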